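(* Let $R$ be a $\mathbb{C}$-algebra which is a noetherian UFD, and for $a,b\in R$ put $A_{a,b}:=R[U,V]/(aU-bV-1)$. Let $r,s,r',s'\in R$ and suppose that each of the pairs $(a,b)=(r,s)$ and $(a,b)=(r',s')$ satisfies: the ideal $(a,b)$ has height $2$; $a,b$ share no common non-unit factor; $A_{a,b}$ is a UFD; $A_{a,b}^*=R^*$; $R$ is rigid and $ML(A_{a,b})=R$; and the restriction map $\operatorname{Aut}_{\mathbb{C}}(A_{a,b})\to\operatorname{Aut}_{\mathbb{C}}(R)$, $\sigma\mapsto\sigma|_R$ (well defined since such $\sigma$ satisfy $\sigma(R)=R$), is surjective. If $A_{r,s}\cong A_{r',s'}$ as $\mathbb{C}$-algebras, then there exists $\varphi\in\operatorname{Aut}_{\mathbb{C}}(R)$ such that $\varphi(r)R+\varphi(s)R=r'R+s'R$.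
   Context: A derivation $D$ of a ring $B$ is locally nilpotent if for every $b\in B$ there is $n$ with $D^n(b)=0$; $\operatorname{LND}(B)$ denotes the set of locally nilpotent $\mathbb{C}$-derivations of the $\mathbb{C}$-algebra $B$. The Makar-Limanov invariant $ML(B)$ is the intersection of the kernels of all $D\in\operatorname{LND}(B)$. $B$ is rigid if $\operatorname{LND}(B)=\{0\}$. $B^*$ denotes the unit group. *)

(* Defs.v *)
From mathcomp Require Import all_boot all_algebra.
From mathcomp Require Import fingroup perm complex Rstruct.
Set Implicit Arguments. Unset Strict Implicit. Unset Printing Implicit Defensive.
Import GRing.Theory.
Local Open Scope ring_scope.

Definition CC : fieldType := complex Rdefinitions.R.

Section RingNotions.
Variable A : comAlgType CC.

Definition isunit (x : A) : Prop := exists y : A, x * y = 1.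
Definition divides (d x : A) : Prop := exists y : A, x = d * y.
Definition associated (x y : A) : Prop := exists w : A, isunit w /\ y = w * x.
Definition is_domain : Prop :=
  (1 : A) != 0 /\ forall x y : A, x * y = 0 -> x = 0 \/ y = 0.
Definition irreducible_elt (p : A) : Prop :=
  p != 0 /\ ~ isunit p /\ forall x y : A, p = x * y -> isunit x \/ isunit y.

Definition all_irr (s : seq A) : Prop :=
  forall i, (i < size s)%N -> irreducible_elt (nth 0 s i).

Definition is_UFD : Prop :=
  is_domain /\
  (forall x : A, x != 0 -> ~ isunit x ->
     exists s : seq A, all_irr s /\ x = \prod_(p <- s) p) /\
  (forall s t : seq A,
     all_irr s -> all_irr t ->
     \prod_(p <- s) p = \prod_(p <- t) p ->
     size s = size t /\
     exists sigma : 'S_(size s), forall i : 'I_(size s),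
       associated (nth 0 s i) (nth 0 t (sigma i))).

Definition is_ideal (I : A -> Prop) : Prop :=
  I 0 /\ (forall x y, I x -> I y -> I (x + y)) /\ (forall x y, I y -> I (x * y)).
Definition is_prime_ideal (P : A -> Prop) : Prop :=
  is_ideal P /\ ~ P 1 /\ forall x y, P (x * y) -> P x \/ P y.
Definition ideal_gen2 (a b : A) (x : A) : Prop := exists y z : A, x = a * y + b * z.

Definition is_noetherian : Prop :=
  forall I : nat -> A -> Prop, (forall n, is_ideal (I n)) ->
    (forall n x, I n x -> I n.+1 x) ->
    exists N, forall n x, (N <= n)%N -> I n x -> I N x.

Definition prime_chain_to (n : nat) (Q : A -> Prop) : Prop :=
  exists P : nat -> A -> Prop,
    (forall i, (i <= n)%N -> is_prime_ideal (P i)) /\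
    (forall i, (i < n)%N -> (forall x, P i x -> P i.+1 x) /\ exists x, P i.+1 x /\ ~ P i x) /\
    (forall x, P n x <-> Q x).

(* Krull height of an ideal I is min over primes P containing I of
   ht P = sup of lengths of prime chains ending at P.
   has_height I 2  <->  ht I = 2 (for I with a prime above it). *)
Definition has_height (I : A -> Prop) (h : nat) : Prop :=
  (forall P, is_prime_ideal P -> (forall x, I x -> P x) -> prime_chain_to h P) /\
  (exists P, is_prime_ideal P /\ (forall x, I x -> P x) /\ ~ prime_chain_to h.+1 P).

Definition no_common_nonunit_factor (a b : A) : Prop :=
  forall d : A, divides d a -> divides d b -> isunit d.

Definition Clinear (f : A -> A) : Prop :=
  (forall x y, f (x + y) = f x + f y) /\ (forall (c : CC) x, f (c *: x) = c *: f x).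
Definition is_Cderivation (D : A -> A) : Prop :=
  Clinear D /\ forall x y, D (x * y) = x * D y + y * D x.
Definition locally_nilpotent (D : A -> A) : Prop :=
  forall b : A, exists n : nat, iter n D b = 0.
Definition is_LND (D : A -> A) : Prop := is_Cderivation D /\ locally_nilpotent D.
Definition ML (x : A) : Prop := forall D, is_LND D -> D x = 0.
Definition rigid : Prop := forall D, is_LND D -> forall x, D x = 0.

End RingNotions.

Definition is_Calg_hom (A B : comAlgType CC) (f : A -> B) : Prop :=
  (forall x y, f (x + y) = f x + f y) /\ (forall x y, f (x * y) = f x * f y) /\
  f 1 = 1 /\ (forall (c : CC) x, f (c *: x) = c *: f x).
Definition is_Calg_iso (A B : comAlgType CC) (f : A -> B) : Prop :=
  is_Calg_hom f /\ bijective f.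
Definition is_Calg_aut (A : comAlgType CC) (f : A -> A) : Prop := is_Calg_iso f.

(* ---------- the ring A_{a,b} = R[U,V]/(aU - bV - 1) ----------
   R[U,V] is {poly {poly R}}: outer variable U, inner variable V. *)
Definition defpoly (R : comAlgType CC) (a b : R) : {poly {poly R}} :=
  (a%:P)%:P * 'X - (b%:P * 'X)%:P - 1.

Definition eval2 (R A : comAlgType CC) (iota : R -> A) (u v : A)
  (p : {poly {poly R}}) : A :=
  (map_poly (fun q : {poly R} => (map_poly iota q).[v]) p).[u].

(* (A, iota, u, v) is a presentation of A_{a,b}: iota is a C-algebra map
   and the induced R-algebra map R[U,V] -> A, U |-> u, V |-> v, is
   surjective with kernel the principal ideal (aU - bV - 1). *)
Definition presents (R : comAlgType CC) (a b : R)
  (A : comAlgType CC) (iota : R -> A) (u v : A) : Prop :=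
  is_Calg_hom iota /\
  (forall x : A, exists p, eval2 iota u v p = x) /\
  (forall p, eval2 iota u v p = 0 <-> exists q, p = q * defpoly a b).

Definition good_pair (R : comAlgType CC) (a b : R)
  (A : comAlgType CC) (iota : R -> A) : Prop :=
  has_height (ideal_gen2 a b) 2 /\
  no_common_nonunit_factor a b /\
  is_UFD A /\
  (forall y : A, isunit y <-> exists x : R, isunit x /\ y = iota x) /\
  rigid R /\
  (forall y : A, ML y <-> exists x : R, y = iota x) /\
  (forall tau : R -> R, is_Calg_aut tau ->
     exists sigma : A -> A, is_Calg_aut sigma /\ forall x, sigma (iota x) = iota (tau x)).

(* Main.v *)
From HB Require Import structures.
Require Import Defs.
From mathcomp Require Import all_boot all_algebra ring.
Set Implicit Arguments. Unset Strict Implicit. Unset Printing Implicit Defensive.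
Import GRing.Theory.
Local Open Scope ring_scope.



Definition dV (R : comAlgType CC) (p : {poly {poly R}}) : {poly {poly R}} :=
  map_poly deriv p.

Lemma dV_mul (R : comAlgType CC) (p q : {poly {poly R}}) :
  dV (p * q) = dV p * q + p * dV q.
Proof.
apply/polyP => i; rewrite /dV coefD !coef_map /= !coefM raddf_sum -big_split /=.
by apply: eq_bigr => j _; rewrite derivM !coef_map.
Qed.

Lemma dV_X (R : comAlgType CC) : dV ('X : {poly {poly R}}) = 0.
Proof.
apply/polyP => i; rewrite /dV coef_map coefX coef0 /=.
by case: (i == 1)%N; rewrite /= ?raddf0 // -polyC1 derivC.
Qed.

Lemma dV_C (R : comAlgType CC) (c : {poly R}) : dV c%:P = (deriv c)%:P.
Proof. by rewrite /dV map_polyC. Qed.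

Lemma dV_add (R : comAlgType CC) (p q : {poly {poly R}}) : dV (p + q) = dV p + dV q.
Proof. by rewrite /dV raddfD. Qed.
Lemma dV_MXaddC (R : comAlgType CC) (q : {poly {poly R}}) c :
  dV (q * 'X + c%:P) = dV q * 'X + (deriv c)%:P.
Proof. by rewrite dV_add dV_mul dV_X mulr0 addr0 dV_C. Qed.

Lemma dV_sub (R : comAlgType CC) (p q : {poly {poly R}}) : dV (p - q) = dV p - dV q.
Proof. by rewrite /dV raddfB. Qed.

Section Eval.
Variables (R A : comAlgType CC) (iota : R -> A) (u v : A).
Hypothesis hi : is_Calg_hom iota.

Definition iotaF := iota.
Lemma iotaF_nmod : nmod_morphism iotaF.
Proof.
case: hi => hD [hM [h1 hZ]]; split; last exact: hD.
by have := hD 0 0; rewrite /iotaF addr0 => /esym /(congr1 (fun z => z - iota 0)); rewrite addrK subrr.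
Qed.
Lemma iotaF_mon : monoid_morphism iotaF.
Proof. by case: hi => hD [hM [h1 hZ]]; split. Qed.
HB.instance Definition _ := GRing.isNmodMorphism.Build R A iotaF iotaF_nmod.
HB.instance Definition _ := GRing.isMonoidMorphism.Build R A iotaF iotaF_mon.

Definition hV : {poly R} -> A := horner_eval v \o map_poly iotaF.
HB.instance Definition _ := GRing.RMorphism.copy hV (horner_eval v \o map_poly iotaF).
Definition ev : {poly {poly R}} -> A := horner_eval u \o map_poly hV.
HB.instance Definition _ := GRing.RMorphism.copy ev (horner_eval u \o map_poly hV).

Lemma ev_eval2 p : eval2 iota u v p = ev p.
Proof. by []. Qed.

Lemma hV_X : hV 'X = v.
Proof. by rewrite /hV /= horner_evalE map_polyX hornerX. Qed.
Lemma hV_C x : hV x%:P = iota x.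
Proof. by rewrite /hV /= horner_evalE map_polyC hornerC. Qed.
Lemma ev_X : ev 'X = u.
Proof. by rewrite /ev /= horner_evalE map_polyX hornerX. Qed.
Lemma ev_C c : ev c%:P = hV c.
Proof. by rewrite /ev /= horner_evalE map_polyC hornerC. Qed.
Lemma ev_CC x : ev (x%:P)%:P = iota x.
Proof. by rewrite ev_C hV_C. Qed.
Lemma ev_XC : ev ('X)%:P = v.
Proof. by rewrite ev_C hV_X. Qed.

Lemma ev_def a b : ev (defpoly a b) = iota a * u - iota b * v - 1.
Proof. by rewrite /defpoly !rmorphB rmorphM /= rmorph1 ev_X ev_CC ev_C rmorphM /= hV_X hV_C. Qed.

Definition isRder (F : A -> A) : Prop :=
  (forall x y, F (x + y) = F x + F y) /\ (forall x y, F (x * y) = x * F y + y * F x) /\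
  (forall x, F (iota x) = 0).

Lemma Rder0 F : isRder F -> F 0 = 0.
Proof.
case=> hD _; have := hD 0 0; rewrite addr0 => /esym /(congr1 (fun z => z - F 0)).
by rewrite addrK subrr.
Qed.
Lemma RderN F : isRder F -> forall x, F (- x) = - F x.
Proof.
move=> hF x; apply/eqP; rewrite -addr_eq0 -hF.1 addNr; exact/eqP/Rder0.
Qed.

Lemma Rder_ev F : isRder F -> forall p,
  F (ev p) = ev (deriv p) * F u + ev (dV p) * F v.
Proof.
move=> hF; have [hD [hM hR]] := hF.
have hVd : forall c, F (hV c) = hV (deriv c) * F v.
  elim/poly_ind => [|c x IH]; first by rewrite !rmorph0 (Rder0 hF) ?raddf0 ?rmorph0 ?mul0r.
  rewrite rmorphD rmorphM /= hV_X hV_C hD hR hM IH derivMXaddC rmorphD rmorphM /= hV_X.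
  ring.
elim/poly_ind => [|q c IH].
  by rewrite !rmorph0 (Rder0 hF) /dV ?raddf0 ?rmorph0 ?mul0r ?addr0.
rewrite rmorphD rmorphM /= ev_X ev_C hD hM IH hVd derivMXaddC dV_MXaddC.
rewrite !rmorphD !rmorphM /= ev_X !ev_C. ring.
Qed.

Variables (a b : R).
Hypothesis hP : presents a b iota u v.
Lemma surj x : exists p, ev p == x.
Proof. by have [p <-] := hP.2.1 x; exists p. Qed.
Lemma kerP p : ev p = 0 <-> exists q, p = q * defpoly a b.
Proof. exact: hP.2.2 p. Qed.

Lemma pres_rel : iota a * u - iota b * v = 1.
Proof.
have : ev (defpoly a b) = 0 by apply/kerP; exists 1; rewrite mul1r.
by rewrite ev_def => /eqP; rewrite subr_eq0 => /eqP.
Qed.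

Definition Phi p := ev (deriv p) * iota b + ev (dV p) * iota a.

Lemma PhiD p q : Phi (p + q) = Phi p + Phi q.
Proof. rewrite /Phi derivD dV_add !rmorphD /=; ring. Qed.
Lemma Phi0 : Phi 0 = 0.
Proof. by rewrite /Phi /dV !raddf0 !mul0r addr0. Qed.
Lemma PhiN p : Phi (- p) = - Phi p.
Proof. by rewrite -[LHS]addr0 -(subrr (Phi p)) addrA -PhiD addNr Phi0 add0r. Qed.
Lemma PhiM p q : Phi (p * q) = ev p * Phi q + ev q * Phi p.
Proof. rewrite /Phi derivM dV_mul !rmorphD !rmorphM /=; ring. Qed.
Lemma Phi_def : Phi (defpoly a b) = 0.
Proof.
rewrite /Phi /defpoly !derivE dV_sub dV_sub dV_mul dV_X !dV_C !derivE.
rewrite !rmorphB !rmorphD !rmorphM /= ?rmorph0 ?rmorph1 !ev_CC ?ev_C ?ev_X ?hV_C.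
ring.
Qed.


Lemma ev_def0 : ev (defpoly a b) = 0.
Proof. by apply/kerP; exists 1; rewrite mul1r. Qed.

Lemma PhiK p : ev p = 0 -> Phi p = 0.
Proof. by case/kerP => q ->; rewrite PhiM Phi_def ev_def0 mulr0 mul0r addr0. Qed.

Definition D0 (x : A) : A := Phi (xchoose (surj x)).

Lemma D0E p : D0 (ev p) = Phi p.
Proof.
rewrite /D0; have /eqP e := xchooseP (surj (ev p)).
set p0 := xchoose _ in e *.
have : Phi (p0 - p) = 0 by apply: PhiK; rewrite rmorphB /= e subrr.
by rewrite PhiD PhiN => /eqP; rewrite subr_eq0 => /eqP.
Qed.

Lemma D0_Rder : isRder D0.
Proof.
split; [|split].
- move=> x y; have [p /eqP <-] := surj x; have [q /eqP <-] := surj y.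
  by rewrite -rmorphD /= !D0E PhiD.
- move=> x y; have [p /eqP <-] := surj x; have [q /eqP <-] := surj y.
  by rewrite -rmorphM /= !D0E PhiM.
- move=> x; rewrite -ev_CC D0E /Phi dV_C !derivC.
  by rewrite ev_C !rmorph0 !mul0r addr0.
Qed.

Lemma D0_u : D0 u = iota b.
Proof. by rewrite -ev_X D0E /Phi derivX dV_X rmorph1 rmorph0 mul1r mul0r addr0. Qed.
Lemma D0_v : D0 v = iota a.
Proof. by rewrite -ev_XC D0E /Phi derivC dV_C derivX rmorph0 mul0r add0r -polyC1 ev_CC (hi.2.2.1) mul1r. Qed.

Lemma Rder_D0 F : isRder F -> forall x, F x = (F v * u - F u * v) * D0 x.
Proof.
move=> hF x; have [p /eqP <-] := surj x.
rewrite (Rder_ev hF) D0E /Phi.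
have [hD [hM hR]] := hF.
have e1 : F (iota a * u - iota b * v) = 0.
  by rewrite pres_rel -(rmorph1 iotaF) /= hR.
rewrite hD RderN // !hM !hR !mulr0 !addr0 in e1.
have e2 : F u * (iota a * u - iota b * v) - iota b * (F v * u - F u * v)
   = u * (iota a * F u - iota b * F v) by ring.
have e3 : F v * (iota a * u - iota b * v) - iota a * (F v * u - F u * v)
   = v * (iota a * F u - iota b * F v) by ring.
rewrite e1 pres_rel !mulr1 !mulr0 in e2 e3.
set c := (F v * u - F u * v) in e2 e3 *.
move/eqP: e2; rewrite subr_eq0 => /eqP ->.
move/eqP: e3; rewrite subr_eq0 => /eqP ->.
ring.
Qed.

Lemma pres_inj : is_domain R -> a != 0 -> forall x, iota x = 0 -> x = 0.
Proof.
move=> [_ hdom] anz x; rewrite -ev_CC => /kerP [q e].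
move: e; have [->|qnz] := eqVneq q 0 => e.
  by move: e; rewrite mul0r => /eqP; rewrite !polyC_eq0 => /eqP.
exfalso; set n := (size q).-1.
have hsz : size q = n.+1 by rewrite /n prednK // lt0n size_poly_eq0.
have : (q * defpoly a b)`_n.+1 = 0 by rewrite -e coefC.
rewrite /defpoly !mulrBr !coefB mulrA coefMX /= coefMC.
have hq : q`_n.+1 = 0 by rewrite nth_default // hsz.
rewrite mulr1 coefMC hq mul0r !subr0 => h.
have : q`_n = 0.
  apply/polyP => i; have := congr1 (fun p : {poly R} => p`_i) h.
  rewrite coefMC coef0 => /hdom [//|/eqP]; by rewrite (negbTE anz).
apply/eqP; have := qnz; rewrite -lead_coef_eq0 lead_coefE hsz.
by []. Qed.

Lemma D0_ex : exists D, isRder D /\ D u = iota b /\ D v = iota a /\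
  forall F, isRder F -> forall x, F x = (F v * u - F u * v) * D x.
Proof. exists D0; split; [exact: D0_Rder|split; [exact: D0_u|split; [exact: D0_v|exact: Rder_D0]]]. Qed.

Lemma iotaB x y : iota (x - y) = iota x - iota y.
Proof. exact: (rmorphB iotaF). Qed.
Lemma iotaD x y : iota (x + y) = iota x + iota y.
Proof. exact: (rmorphD iotaF). Qed.
Lemma iotaM x y : iota (x * y) = iota x * iota y.
Proof. exact: (rmorphM iotaF). Qed.
Lemma iota0 : iota 0 = 0.
Proof. exact: (rmorph0 iotaF). Qed.
Lemma iota1 : iota 1 = 1.
Proof. exact: (rmorph1 iotaF). Qed.

End Eval.



Section Hom.
Variables (A B : comAlgType CC) (f : A -> B).
Hypothesis hf : is_Calg_hom f.
Definition fF := f.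
Lemma fF_nmod : nmod_morphism fF.
Proof.
case: hf => hD [hM [h1 hZ]]; split; last exact: hD.
by have := hD 0 0; rewrite /fF addr0 => /esym /(congr1 (fun z => z - f 0)); rewrite addrK subrr.
Qed.
Lemma fF_mon : monoid_morphism fF.
Proof. by case: hf => hD [hM [h1 hZ]]; split. Qed.
HB.instance Definition _ := GRing.isNmodMorphism.Build A B fF fF_nmod.
HB.instance Definition _ := GRing.isMonoidMorphism.Build A B fF fF_mon.
Lemma homB x y : f (x - y) = f x - f y. Proof. exact: (rmorphB fF). Qed.
Lemma homD x y : f (x + y) = f x + f y. Proof. exact: (rmorphD fF). Qed.
Lemma homN x : f (- x) = - f x. Proof. exact: (rmorphN fF). Qed.
Lemma homM x y : f (x * y) = f x * f y. Proof. exact: (rmorphM fF). Qed.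
Lemma hom0 : f 0 = 0. Proof. exact: (rmorph0 fF). Qed.
Lemma hom1 : f 1 = 1. Proof. exact: (rmorph1 fF). Qed.
Lemma homZ c x : f (c *: x) = c *: f x. Proof. exact: hf.2.2.2. Qed.
End Hom.

Lemma inv_hom (A B : comAlgType CC) (f : A -> B) (g : B -> A) :
  is_Calg_hom f -> cancel f g -> cancel g f -> is_Calg_hom g.
Proof.
move=> hf fK gK; split; [|split; [|split]].
- by move=> x y; apply: (can_inj fK); rewrite gK homD // !gK.
- by move=> x y; apply: (can_inj fK); rewrite gK homM // !gK.
- by apply: (can_inj fK); rewrite gK hom1.
- by move=> c x; apply: (can_inj fK); rewrite gK homZ // !gK.
Qed.

Lemma comp_hom (A B C : comAlgType CC) (f : A -> B) (g : B -> C) :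
  is_Calg_hom f -> is_Calg_hom g -> is_Calg_hom (g \o f).
Proof.
move=> hf hg; split; [|split; [|split]] => /=.
- by move=> x y; rewrite !homD.
- by move=> x y; rewrite !homM.
- by rewrite !hom1.
- by move=> c x; rewrite !homZ.
Qed.

Lemma ML_transport (A B : comAlgType CC) (f : A -> B) (g : B -> A) :
  is_Calg_hom f -> cancel f g -> cancel g f -> forall y, ML y -> ML (f y).
Proof.
move=> hf fK gK y hy D' [[[hD' hZ'] hM'] hN'].
have hg := inv_hom hf fK gK.
pose D := g \o D' \o f.
have hLND : is_LND D.
  split; [split; [split|]|].
  - by move=> x z; rewrite /D /= homD // hD' homD.
  - by move=> c x; rewrite /D /= homZ // hZ' homZ.
  - by move=> x z; rewrite /D /= (homM hf) hM' (homD hg) !(homM hg) !fK.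
  - move=> x; have [n hn] := hN' (f x); exists n.
    have -> : iter n D x = g (iter n D' (f x)).
      elim: n {hn} => [|n IH] /=; first by rewrite fK.
      by rewrite IH /D /= gK.
    by rewrite hn hom0.
have := hy D hLND; rewrite /D /= => /(congr1 f); rewrite gK => ->.
exact: hom0.
Qed.



Lemma key (R : comAlgType CC) (r s r' s' : R)
  (A : comAlgType CC) (iota : R -> A) (u v : A)
  (A' : comAlgType CC) (iota' : R -> A') (u' v' : A') (g : A -> A') (h : A' -> A) :
  is_domain R -> r != 0 ->
  presents r s iota u v -> presents r' s' iota' u' v' ->
  is_domain A ->
  (forall y, isunit y -> exists x, isunit x /\ y = iota x) ->
  (forall x, ML (iota x)) -> (forall y, ML y -> exists x, y = iota x) ->
  is_Calg_hom g -> cancel g h -> cancel h g ->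
  (forall x, g (iota x) = iota' x) ->
  ideal_gen2 r s r' /\ ideal_gen2 r s s'.
Proof.
move=> Rdom rnz hP hP' [_ Adom] hU hML1 hML2 hg gK hK giota.
have hh := inv_hom hg gK hK.
have hi := hP.1; have hi' := hP'.1.
have hiota : forall x, h (iota' x) = iota x by move=> x; rewrite -giota gK.
have [D [hD [Du [Dv hDet]]]] := D0_ex hi hP.
have [D' [hD' [D'u [D'v hDet']]]] := D0_ex hi' hP'.
pose E := fun x => h (D' (g x)).
have hE : isRder iota E.
  have [aD [mD kD]] := hD'.
  split; [|split] => [x y|x y|x]; rewrite /E.
  - by rewrite (homD hg) aD (homD hh).
  - by rewrite (homM hg) mD (homD hh) !(homM hh) !gK.
  - by rewrite giota kD (hom0 hh).
pose F' := fun y => g (D (h y)).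
have hF' : isRder iota' F'.
  have [aD [mD kD]] := hD.
  split; [|split] => [x y|x y|x]; rewrite /F'.
  - by rewrite (homD hh) aD (homD hg).
  - by rewrite (homM hh) mD (homD hg) !(homM hg) !hK.
  - by rewrite hiota kD (hom0 hg).
set c := E v * u - E u * v.
have Ec : forall x, E x = c * D x by exact: hDet.
set c' := F' v' * u' - F' u' * v'.
have Fc : forall x, F' x = c' * D' x by exact: hDet'.
have cu : c * h c' = 1.
  have e : D v = h c' * (c * D v).
    by rewrite -Ec /E -(homM hh) -Fc /F' !gK.
  have : (1 - c * h c') * iota r = 0 by rewrite mulrBl mul1r -Dv {1}e; ring.
  case/Adom => [/eqP|/(pres_inj hi hP Rdom rnz) /eqP]; last by rewrite (negbTE rnz).
  by rewrite subr_eq0 => /eqP.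
have [gam [[del gd] cg]] : exists x, isunit x /\ c = iota x by apply: hU; exists (h c').
have ML0 : forall z, D z = 0 -> exists y, z = iota y.
  move=> z Dz; apply: hML2 => F [[[aF zF] mF] nF].
  have hFR : isRder iota F.
    split; [exact: aF|split; [exact: mF|]] => x; exact: hML1.
  by rewrite (hDet F hFR) Dz mulr0.
have claim : forall w t, D' w = iota' t -> ideal_gen2 r s t.
  move=> w t Dw; set a := h w.
  have Ea : E a = iota t by rewrite /E /a hK Dw hiota.
  have Da : D a = iota (del * t).
    by rewrite (iotaM hi) -Ea Ec cg mulrA -(iotaM hi) (mulrC del gam) gd (iota1 hi) mul1r.
  set x := del * t in Da.
  have [aD [mD kD]] := hD.
  have hzy : D (iota s * a - iota x * u) = 0.
    by rewrite aD (RderN hD) !mD !kD Da Du !mulr0 !addr0 mulrC subrr.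
  have [y ey] := ML0 _ hzy.
  have hzz : D (iota r * a - iota x * v) = 0.
    by rewrite aD (RderN hD) !mD !kD Da Dv !mulr0 !addr0 mulrC subrr.
  have [z ez] := ML0 _ hzz.
  have ex : x = s * z - r * y.
    apply/eqP; rewrite -subr_eq0; apply/eqP; apply: (pres_inj hi hP Rdom rnz).
    rewrite !(iotaB hi) (iotaM hi s z) (iotaM hi r y) -ey -ez.
    have rel := pres_rel hi hP.
    have e : iota x * (iota r * u - iota s * v) - (iota s * (iota r * a - iota x * v)
       - iota r * (iota s * a - iota x * u)) = 0 by ring.
    by rewrite rel mulr1 in e.
  exists (- (gam * y)), (gam * z).
  have -> : t = gam * x by rewrite /x mulrA gd mul1r.
  rewrite ex; ring.
split; [apply: (claim v')|apply: (claim u')]; by [rewrite D'v|rewrite D'u].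
Qed.



Lemma nz_first (R : comAlgType CC) (a b : R) :
  has_height (ideal_gen2 a b) 2 -> no_common_nonunit_factor a b -> a != 0.
Proof.
move=> [_ [P [[_ [P1 _]] [hPI _]]]] nc; apply/negP => /eqP a0.
have [y hy] : isunit b by apply: nc; [exists 0; rewrite a0 mulr0|exists 1; rewrite mulr1].
by apply: P1; apply: hPI; exists 0, y; rewrite hy mulr0 add0r.
Qed.

Lemma ideal_sub (R : comAlgType CC) (a b a' b' x : R) :
  ideal_gen2 a b a' -> ideal_gen2 a b b' -> ideal_gen2 a' b' x -> ideal_gen2 a b x.
Proof.
move=> [y1 [z1 e1]] [y2 [z2 e2]] [y [z ->]].
by exists (y1 * y + y2 * z), (z1 * y + z2 * z); rewrite e1 e2; ring.
Qed.

Lemma tau_hom (R B C : comAlgType CC) (j : R -> B) (k : R -> C) (F : B -> C) (tau : R -> R) :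
  is_Calg_hom j -> is_Calg_hom k -> is_Calg_hom F -> injective k ->
  (forall x, F (j x) = k (tau x)) -> is_Calg_hom tau.
Proof.
move=> hj hk hF ik e; split; [|split; [|split]].
- by move=> x y; apply: ik; rewrite -e (homD hj) (homD hF) (homD hk) !e.
- by move=> x y; apply: ik; rewrite -e (homM hj) (homM hF) (homM hk) !e.
- by apply: ik; rewrite -e (hom1 hj) (hom1 hF) (hom1 hk).
- by move=> c x; apply: ik; rewrite -e (homZ hj) (homZ hF) (homZ hk) !e.
Qed.

Lemma inj_of (R A : comAlgType CC) (iota : R -> A) (u v : A) (a b : R) :
  presents a b iota u v -> is_domain R -> a != 0 -> injective iota.
Proof.
move=> hP Rd anz x y e; apply/eqP; rewrite -subr_eq0; apply/eqP.
by apply: (pres_inj hP.1 hP Rd anz); rewrite (iotaB hP.1) e subrr.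
Qed.

Theorem mainTheorem7 (R : comAlgType CC) (r s r' s' : R)
  (A : comAlgType CC) (iota : R -> A) (u v : A)
  (A' : comAlgType CC) (iota' : R -> A') (u' v' : A') :
  is_noetherian R -> is_UFD R ->
  presents r s iota u v -> presents r' s' iota' u' v' ->
  good_pair r s iota -> good_pair r' s' iota' ->
  (exists f : A -> A', is_Calg_iso f) ->
  exists phi : R -> R, is_Calg_aut phi /\
    forall x : R, ideal_gen2 (phi r) (phi s) x <-> ideal_gen2 r' s' x.
Proof.
move=> _ [Rdom _] hP hP' [ht [nc [[Adom _] [un [_ [ml _]]]]]]
  [ht' [nc' [[Adom' _] [un' [_ [ml' aut']]]]]] [f [hf [finv fK finvK]]].
have hi := hP.1; have hi' := hP'.1.
have rnz := nz_first ht nc; have rnz' := nz_first ht' nc'.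
have ii := inj_of hP Rdom rnz; have ii' := inj_of hP' Rdom rnz'.
have hfinv := inv_hom hf fK finvK.
have exphi : forall x, exists x', f (iota x) == iota' x'.
  move=> x; have /ml' [x' ->] : ML (f (iota x)).
    by apply: (ML_transport hf fK finvK); apply/ml; exists x.
  by exists x'.
have expsi : forall x, exists x', finv (iota' x) == iota x'.
  move=> x; have /ml [x' ->] : ML (finv (iota' x)).
    by apply: (ML_transport hfinv finvK fK); apply/ml'; exists x.
  by exists x'.
pose phi x := xchoose (exphi x); pose psi x := xchoose (expsi x).
have ephi : forall x, f (iota x) = iota' (phi x) by move=> x; apply/eqP/(xchooseP (exphi x)).
have epsi : forall x, finv (iota' x) = iota (psi x) by move=> x; apply/eqP/(xchooseP (expsi x)).
have hpsi : is_Calg_hom psi := tau_hom hi' hi hfinv ii epsi.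
have psiK : cancel psi phi.
  by move=> x; apply: ii'; rewrite -ephi -epsi finvK.
have phiK : cancel phi psi.
  by move=> x; apply: ii; rewrite -epsi -ephi fK.
have [sig [[hsig bsig] esig]] := aut' psi (conj hpsi (Bijective psiK phiK)).
pose G := sig \o f.
have hG : is_Calg_hom G by apply: comp_hom.
have [Ginv GK GinvK] : bijective G by apply: bij_comp => //; exists finv.
have eG : forall x, G (iota x) = iota' x by move=> x; rewrite /G /= ephi esig phiK.
have eGinv : forall x, Ginv (iota' x) = iota x by move=> x; rewrite -eG GK.
have [k1 k2] := key Rdom rnz hP hP' Adom (fun y => (un y).1)
  (fun x => (ml (iota x)).2 (ex_intro _ x erefl)) (fun y => (ml y).1) hG GK GinvK eG.
have hGinv := inv_hom hG GK GinvK.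
have [k3 k4] := key Rdom rnz' hP' hP Adom' (fun y => (un' y).1)
  (fun x => (ml' (iota' x)).2 (ex_intro _ x erefl)) (fun y => (ml' y).1) hGinv GinvK GK eGinv.
exists id; split.
  split; last by exists id.
  by split; [|split; [|split]].
move=> x /=; split; [exact: ideal_sub|exact: ideal_sub].
Qed.
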